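(* Let $(L_*,b)$ and $(M_*,b)$ be chain complexes, $i:(L_*,b)\to(M_*,b)$ and $p:(M_*,b)\to(L_*,b)$ chain maps, and $h$ a map of degree $+1$ on $M_*$ with $ip=1+bh+hb$. Let $\delta$ be a small perturbation, put $A=(1-\delta h)^{-1}\delta$, and define $$i_\infty=i+hAi,\quad p_\infty=p+pAh,\quad h_\infty=h+hAh,\quad b_\infty=b+pAi.$$ Let $h'=p h_\infty i$ and $h''=p_\infty h i_\infty$. Then $$pi-1=bh'+h'b-(p i_\infty-1)(p_\infty i-1)$$ and $$p_\infty i_\infty-1=b_\infty h''+h''b_\infty-(p_\infty i-1)(p i_\infty-1).$$
   Context: Complexes are chain complexes of modules over a ring, with differentials of degree $-1$. A perturbation $\delta$ is a graded map $M_*\to M_*$ of the same degree as $b$ such that $(b+\delta)^2=0$. It is called small if $1-\delta h$ is invertible. It is known (homological perturbation lemma, HR version) that for a small perturbation, $(L_*,b_\infty)$ is a complex and that $i_\infty:(L_*,b_\infty)\to(M_*,b+\delta)$ and $p_\infty:(M_*,b+\delta)\to(L_*,b_\infty)$ are chain maps. *)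

(* Defs.v *)
From HB Require Import structures.
From mathcomp Require Import all_boot all_order all_algebra.
Set Implicit Arguments. Unset Strict Implicit. Unset Printing Implicit Defensive.
Import GRing.Theory.
Local Open Scope ring_scope.

(* A Z-graded module M = (+)_{n in Z} M_n over a ring R, presented by its
   total module together with the family of projections onto the homogeneous
   components M_n (orthogonal idempotents, every element being the finite sum
   of its components). *)
Record graded (R : pzRingType) (M : lmodType R) := Graded {
  gproj : int -> {linear M -> M};
  gproj_orth : forall n m (x : M),
    gproj n (gproj m x) = if n == m then gproj n x else 0;
  gproj_fin : forall x : M, exists s : seq int,
    uniq s /\ x = \sum_(n <- s) gproj n x /\
    (forall n, n \notin s -> gproj n x = 0)
}.

Definition graded_map (R : pzRingType) (M N : lmodType R)
  (gM : graded M) (gN : graded N) (d : int) (f : M -> N) : Prop :=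
  forall (n : int) (x : M), f (gproj gM n x) = gproj gN (n + d) (f x).

(* Main.v *)
Require Import Defs.
From HB Require Import structures.
From mathcomp Require Import all_boot all_order all_algebra.
Import GRing.Theory.
Local Open Scope ring_scope.


Inductive zexpr := ZAtom of nat | ZAdd of zexpr & zexpr | ZOpp of zexpr | ZZero.

Fixpoint zeval {V : zmodType} (env : seq V) (e : zexpr) : V :=
  match e with
  | ZAtom n => nth 0 env n
  | ZAdd a b => zeval env a + zeval env b
  | ZOpp a => - zeval env a
  | ZZero => 0
  end.

Fixpoint zcoef (e : zexpr) (k : nat) : int :=
  match e with
  | ZAtom n => if n == k then 1 else 0
  | ZAdd a b => zcoef a k + zcoef b k
  | ZOpp a => - zcoef a k
  | ZZero => 0
  end.

Lemma zeval_sum (V : zmodType) (env : seq V) e :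
  zeval env e = \sum_(k < size env) nth 0 env k *~ zcoef e k.
Proof.
elim: e => [n|a iha b ihb|a iha|] /=.
- case: (ltnP n (size env)) => hn.
    rewrite (bigD1 (Ordinal hn)) //= eqxx mulr1z big1 ?addr0 // => j hj.
    case: eqP => [e|]; last by rewrite mulr0z.
    by move: hj; rewrite -(inj_eq val_inj) /= e eqxx.
  rewrite nth_default // big1 // => j _.
  case: eqP => [e|]; last by rewrite mulr0z.
  by move: (ltn_ord j); rewrite -e ltnNge hn.
- by rewrite iha ihb -big_split; apply: eq_bigr => j _; rewrite mulrzDr.
- by rewrite iha -sumrN; apply: eq_bigr => j _; rewrite mulrNz.
- by rewrite big1 // => j _; rewrite mulr0z.
Qed.

Lemma zeval_eq (V : zmodType) (env : seq V) e1 e2 :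
  all (fun k => zcoef e1 k == zcoef e2 k) (iota 0 (size env)) ->
  zeval env e1 = zeval env e2.
Proof.
move=> /allP H; rewrite !zeval_sum; apply: eq_bigr => j _.
have hj : (val j \in iota 0 (size env)) by rewrite mem_iota /= add0n ltn_ord.
by have /eqP -> := H j hj.
Qed.

Ltac zfind x env :=
  lazymatch env with
  | ?y :: ?t =>
      match constr:(tt) with
      | _ => let _ := match goal with _ => unify x y end in
             let n := eval compute in (size t) in constr:(n)
      | _ => zfind x t
      end
  end.

Ltac zreify t env :=
  lazymatch t with
  | GRing.add ?a ?b =>
      let r1 := zreify a env in
      lazymatch r1 with (?ea, ?env1) =>
        let r2 := zreify b env1 in
        lazymatch r2 with (?eb, ?env2) => constr:((ZAdd ea eb, env2)) end end
  | GRing.opp ?a =>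
      let r1 := zreify a env in
      lazymatch r1 with (?ea, ?env1) => constr:((ZOpp ea, env1)) end
  | GRing.zero => constr:((ZZero, env))
  | _ =>
      match constr:(tt) with
      | _ => let n := zfind t env in constr:((ZAtom n, env))
      | _ => let n := eval compute in (size env) in constr:((ZAtom n, t :: env))
      end
  end.

Ltac zmod :=
  lazymatch goal with
  | |- @eq ?T ?l ?r =>
    let r1 := zreify l (@nil T) in
    lazymatch r1 with (?e1, ?env1) =>
      let r2 := zreify r env1 in
      lazymatch r2 with (?e2, ?env2) =>
        let envr := eval cbv [rev catrev] in (rev env2) in
        change (zeval envr e1 = zeval envr e2);
        apply: zeval_eq; vm_compute; reflexivity
      end end
  end.


Lemma zuse {V : zmodType} {a b l r : V} : a = b -> l - r - (a - b) = 0 -> l = r.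
Proof. by move=> -> /eqP; rewrite subrr subr0 subr_eq0 => /eqP. Qed.

Ltac zc0 := zmod.
Ltac zc1 H := first [ apply: (zuse H); zc0 | apply: (zuse (esym H)); zc0 ].
Ltac zc2 H1 H2 := first [ apply: (zuse H1); zc1 H2 | apply: (zuse (esym H1)); zc1 H2 ].
Ltac zc3 H1 H2 H3 := first [ apply: (zuse H1); zc2 H2 H3 | apply: (zuse (esym H1)); zc2 H2 H3 ].
Theorem lemma1p9 (R : pzRingType) (L M : lmodType R)
  (gL : graded L) (gM : graded M)
  (bL : {linear L -> L}) (bM : {linear M -> M})
  (i : {linear L -> M}) (p : {linear M -> L}) (h : {linear M -> M})
  (delta : {linear M -> M}) (u : M -> M)
  (* (L_*, b) and (M_*, b) are chain complexes (differentials of degree -1) *)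
  (hbL_deg : graded_map gL gL (-1) bL) (hbL2 : forall x, bL (bL x) = 0)
  (hbM_deg : graded_map gM gM (-1) bM) (hbM2 : forall x, bM (bM x) = 0)
  (* i and p are chain maps *)
  (hi_deg : graded_map gL gM 0 i) (hi_chain : forall x, bM (i x) = i (bL x))
  (hp_deg : graded_map gM gL 0 p) (hp_chain : forall x, bL (p x) = p (bM x))
  (* h has degree +1 and ip = 1 + bh + hb *)
  (hh_deg : graded_map gM gM 1 h)
  (hiph : forall x, i (p x) = x + bM (h x) + h (bM x))
  (* delta is a perturbation: same degree as b, (b + delta)^2 = 0 *)
  (hdelta_deg : graded_map gM gM (-1) delta)
  (hdelta2 : forall x, (bM (bM x + delta x)) + delta (bM x + delta x) = 0)
  (* delta is small: u is a two-sided inverse of 1 - delta h *)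
  (hu_l : forall x, u (x - delta (h x)) = x)
  (hu_r : forall x, u x - delta (h (u x)) = x) :
  let A := fun x => u (delta x) in
  let i_inf := fun x => i x + h (A (i x)) in
  let p_inf := fun x => p x + p (A (h x)) in
  let h_inf := fun x => h x + h (A (h x)) in
  let b_inf := fun x => bL x + p (A (i x)) in
  let h' := fun x => p (h_inf (i x)) in
  let h'' := fun x => p_inf (h (i_inf x)) in
  (forall x : L,
     p (i x) - x
     = bL (h' x) + h' (bL x)
       - (p (i_inf (p_inf (i x) - x)) - (p_inf (i x) - x))) /\
  (forall x : L,
     p_inf (i_inf x) - x
     = b_inf (h'' x) + h'' (b_inf x)
       - (p_inf (i (p (i_inf x) - x)) - (p (i_inf x) - x))).
Proof.
move=> A i_inf p_inf h_inf b_inf h' h''.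
have uD : forall x y, u (x + y) = u x + u y.
  move=> x y.
  have e : (u x + u y) - delta (h (u x + u y))
         = (u x - delta (h (u x))) + (u y - delta (h (u y))).
    by rewrite !linearD /=; zmod.
  by rewrite !hu_r in e; rewrite -e hu_l.
have uN : forall x, u (- x) = - u x.
  move=> x.
  have e : (- u x) - delta (h (- u x)) = - (u x - delta (h (u x))).
    rewrite !linearN /=. zmod.
  by rewrite !hu_r in e; rewrite -e hu_l.
have u0 : u 0 = 0.
  have e := hu_l 0; rewrite -[RHS]e; congr u; rewrite !linear0; zmod.
have A1 : forall y, u (delta y) = delta y + delta (h (u (delta y))).
  move=> y; have e := hu_r (delta y); set v := u (delta y) in e *.
  by rewrite -[X in _ = X + _]e subrK.
have A2 : forall y, u (delta y) = delta y + u (delta (h (delta y))).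
  move=> y; have e := hu_l (delta y); rewrite uD uN in e.
  by rewrite -[X in _ = X + _]e subrK.
have d2 : forall x, bM (delta x) + delta (bM x) + delta (delta x) = 0.
  move=> x; have := hdelta2 x; rewrite !linearD hbM2 add0r => <-; zmod.
pose X := fun z => bM (u (delta z)) + u (delta (bM z)) + u (delta (u (delta z)))
   + u (delta (bM (h (u (delta z))))) + u (delta (h (bM (u (delta z))))).
have key : forall z, X z - delta (h (X z)) = 0.
  move=> z; rewrite /X.
  have r1 := hu_r (delta (bM z)).
  have r2 := hu_r (delta (u (delta z))).
  have r3 := hu_r (delta (bM (h (u (delta z))))).
  have r4 := hu_r (delta (h (bM (u (delta z))))).
  have e1 := A1 z.
  have eb := f_equal bM e1. have ed := f_equal delta e1.
  have g1 := d2 z. have g2 := d2 (h (u (delta z))).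
  rewrite !linearD /= in eb ed.
  rewrite !(linearD, linearN, uD, uN) /=.
  apply: (zuse r1); apply: (zuse r2); apply: (zuse r3); apply: (zuse r4).
  apply: (zuse eb); apply: (zuse ed); apply: (zuse g1); apply: (zuse g2).
  zmod.
have A3 : forall z, X z = 0.
  by move=> z; have e := hu_l (X z); rewrite key u0 in e; rewrite -e.
have F2 : forall y, b_inf (p_inf y) = p_inf (bM y + delta y).
  move=> y. have pa2 := f_equal p (A2 y). have x1 := f_equal p (A3 (h y)).
  rewrite /X /= in x1. rewrite ?(linearD, linearN bL, linearN bM, linearN i, linearN p, linearN h, linearN delta, linear0, uD, uN, u0, hbM2, hbL2) /= in x1. rewrite ?(linearD, linearN bL, linearN bM, linearN i, linearN p, linearN h, linearN delta, linear0, uD, uN, u0, hbM2, hbL2) /= in pa2.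
  rewrite /b_inf /p_inf /A ?(linearD, linearN bL, linearN bM, linearN i, linearN p, linearN h, linearN delta, linear0, uD, uN, u0, hbM2, hbL2) /=. rewrite ?hp_chain ?hiph ?(linearD, linearN bL, linearN bM, linearN i, linearN p, linearN h, linearN delta, linear0, uD, uN, u0, hbM2, hbL2) /=.
  apply: (zuse x1); apply: (zuse pa2); zmod.
have F3 : forall x, i_inf (b_inf x) = bM (i_inf x) + delta (i_inf x).
  move=> x. have a1 := A1 (i x). have hx := f_equal h (A3 (i x)).
  rewrite /X /= in hx. rewrite ?(linearD, linearN bL, linearN bM, linearN i, linearN p, linearN h, linearN delta, linear0, uD, uN, u0, hbM2, hbL2) /= in hx. rewrite ?(linearD, linearN bL, linearN bM, linearN i, linearN p, linearN h, linearN delta, linear0, uD, uN, u0, hbM2, hbL2) /= in a1.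
  rewrite /b_inf /i_inf /A ?(linearD, linearN bL, linearN bM, linearN i, linearN p, linearN h, linearN delta, linear0, uD, uN, u0, hbM2, hbL2) /=. rewrite -?hi_chain ?hiph ?(linearD, linearN bL, linearN bM, linearN i, linearN p, linearN h, linearN delta, linear0, uD, uN, u0, hbM2, hbL2) /=.
  apply: (zuse a1); apply: (zuse hx); zmod.
split => x.
  have hx := f_equal (fun y => p (h y)) (A3 (h (i x))).
  rewrite /X /= in hx. rewrite ?(linearD, linearN bL, linearN bM, linearN i, linearN p, linearN h, linearN delta, linear0, uD, uN, u0, hbM2, hbL2) /= in hx.
  rewrite /h' /h_inf /i_inf /p_inf /A ?(linearD, linearN bL, linearN bM, linearN i, linearN p, linearN h, linearN delta, linear0, uD, uN, u0, hbM2, hbL2) /=. rewrite ?hp_chain -?hi_chain ?(linearD, linearN bL, linearN bM, linearN i, linearN p, linearN h, linearN delta, linear0, uD, uN, u0, hbM2, hbL2) /=.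
  rewrite ?hiph ?(linearD, linearN bL, linearN bM, linearN i, linearN p, linearN h, linearN delta, linear0, uD, uN, u0, hbM2, hbL2) /=.
  zc1 hx.
rewrite /h'' F2 F3.
have E1 := f_equal (fun y => p_inf (h y)) (A1 (i x)).
have E2 := f_equal p (A2 (h (i_inf x))).
rewrite /p_inf /i_inf /A /= in E1 E2. rewrite ?(linearD, linearN bL, linearN bM, linearN i, linearN p, linearN h, linearN delta, linear0, uD, uN, u0, hbM2, hbL2) /= in E1. rewrite ?(linearD, linearN bL, linearN bM, linearN i, linearN p, linearN h, linearN delta, linear0, uD, uN, u0, hbM2, hbL2) /= in E2.
rewrite /p_inf /i_inf /A ?(linearD, linearN bL, linearN bM, linearN i, linearN p, linearN h, linearN delta, linear0, uD, uN, u0, hbM2, hbL2) /=. rewrite ?hp_chain -?hi_chain ?(linearD, linearN bL, linearN bM, linearN i, linearN p, linearN h, linearN delta, linear0, uD, uN, u0, hbM2, hbL2) /=.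
rewrite ?hiph ?(linearD, linearN bL, linearN bM, linearN i, linearN p, linearN h, linearN delta, linear0, uD, uN, u0, hbM2, hbL2) /=.
zc2 E1 E2.

Qed.
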